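(* Every maximal $k$-ideal of the semiring $V\mathbb{B}(\mathbf{t})^\circ=\{x\in V\mathbb{B}(\mathbf{t}):x\le1\}$ is of the form \[ \mathfrak{m}^\dagger_<=\Big\{\tfrac ab\in V\mathbb{B}(\mathbf{t})^\circ : \min{}_<(b)\notin a\Big\} \] for some monomial order $<$ on $\mathbb{N}^m$ (here $a,b\in V\mathbb{B}[\mathbf{t}]$ are viewed as finite subsets of $\mathbb{N}^m$, and the condition ''$\min_<(b)\notin a$'' is what the paper writes as $a_{\min_<(b)}=0$).
   Context: $V\mathbb{B}[\mathbf{t}]$ ($\mathbf{t}=(t_1,\dots,t_m)$) is the idempotent semiring of subsets of $\mathbb{N}^m$ equal to the vertex set of their Newton polyhedron $\operatorname{conv}(\cdot)+\mathbb{R}^m_{\ge0}$, with $a\oplus b$ = vertices of the Newton polyhedron of $a\cup b$, $a\odot b$ = vertices of that of $a+b$, $0=\emptyset$, $1=\{0\}$. $V\mathbb{B}(\mathbf{t})$ is its fraction semifield, ordered by $x\le y$ iff $x\oplus y=y$. An ideal of a semiring contains $0$ and is closed under addition and multiplication by semiring elements; it is a $k$-ideal if $a+b\in I$, $a\in I$ imply $b\in I$. A monomial order on $\mathbb{N}^m$ is a total order $<$ with $0<a$ for $a\ne0$ and $a<b\Rightarrow a+c<b+c$. *)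

(* Defs.v *)
From HB Require Import structures.
From mathcomp Require Import all_boot all_order all_algebra.
From mathcomp Require Import finmap boolp Rstruct.
From Stdlib Require Import Reals.
Set Implicit Arguments. Unset Strict Implicit. Unset Printing Implicit Defensive.
Import Order.TTheory GRing.Theory Num.Theory.
Local Open Scope fset_scope.
Local Open Scope ring_scope.

Section VB.
Variable m : nat.

Definition pt := {ffun 'I_m -> nat}.
Definition padd (x y : pt) : pt := [ffun i => (x i + y i)%N].
Definition pzero : pt := [ffun => 0%N].

Definition fsub := {fset pt}.

(* Newton polyhedron conv(S) + R^m_{>=0}, as a subset of R^m *)
Definition newton (S : fsub) (x : 'I_m -> R) : Prop :=
  exists lam : pt -> R,
    (forall s, 0 <= lam s) /\ \sum_(s <- S) lam s = 1 /\
    forall i, \sum_(s <- S) lam s * ((s i)%:R : R) <= x i.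

Definition is_vertex (S : fsub) (x : 'I_m -> R) : Prop :=
  newton S x /\
  forall y z, newton S y -> newton S z ->
    (forall i, x i = (y i + z i) / 2) -> forall i, y i = z i.

Definition embed (p : pt) : 'I_m -> R := fun i => ((p i)%:R : R).

(* vertex set of the Newton polyhedron of S (all vertices lie in S) *)
Definition Vert (S : fsub) : fsub := [fset p in S | `[< is_vertex S (embed p) >]].

(* elements of VB[t] *)
Definition isVB (a : fsub) : Prop := Vert a = a.

Definition vadd (a b : fsub) : fsub := Vert (a `|` b).
Definition vmul (a b : fsub) : fsub := Vert [fset padd x y | x in a, y in b].
Definition vzero : fsub := fset0.
Definition vone : fsub := [fset pzero].

(* fractions a/b of the semifield VB(t), represented by pairs (a,b) *)
Definition frac := (fsub * fsub)%type.
Definition isFrac (p : frac) : Prop := isVB p.1 /\ isVB p.2 /\ p.2 <> fset0.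
Definition frac_eq (p q : frac) : Prop := vmul p.1 q.2 = vmul q.1 p.2.
Definition frac_add (p q : frac) : frac :=
  (vadd (vmul p.1 q.2) (vmul q.1 p.2), vmul p.2 q.2).
Definition frac_mul (p q : frac) : frac := (vmul p.1 q.1, vmul p.2 q.2).
Definition fzero : frac := (vzero, vone).
Definition fone : frac := (vone, vone).
Definition frac_le (p q : frac) : Prop := frac_eq (frac_add p q) q.

Definition circ (p : frac) : Prop := isFrac p /\ frac_le p fone.

(* subsets of VB(t)^o, given as predicates on representatives that are
   closed under equality of fractions *)
Definition subset_circ (I : frac -> Prop) : Prop :=
  (forall p, I p -> circ p) /\
  (forall p q, circ q -> frac_eq p q -> I p -> I q).

Definition ideal (I : frac -> Prop) : Prop :=
  subset_circ I /\ I fzero /\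
  (forall p q, I p -> I q -> I (frac_add p q)) /\
  (forall r p, circ r -> I p -> I (frac_mul r p)).

Definition k_ideal (I : frac -> Prop) : Prop :=
  ideal I /\
  forall p q, circ p -> circ q -> I (frac_add p q) -> I p -> I q.

Definition proper (I : frac -> Prop) : Prop := exists p, circ p /\ ~ I p.

Definition maximal_k_ideal (I : frac -> Prop) : Prop :=
  k_ideal I /\ proper I /\
  forall J, k_ideal J -> proper J -> (forall p, I p -> J p) ->
    forall p, J p -> I p.

Definition monomial_order (lt : pt -> pt -> Prop) : Prop :=
  (forall x, ~ lt x x) /\
  (forall x y z, lt x y -> lt y z -> lt x z) /\
  (forall x y, x <> y -> lt x y \/ lt y x) /\
  (forall a, a <> pzero -> lt pzero a) /\
  (forall a b c, lt a b -> lt (padd a c) (padd b c)).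

Definition is_min (lt : pt -> pt -> Prop) (b : fsub) (y : pt) : Prop :=
  y \in b /\ forall z, z \in b -> z <> y -> lt y z.

Definition mdagger (lt : pt -> pt -> Prop) (p : frac) : Prop :=
  circ p /\
  exists a b, isFrac (a, b) /\ frac_eq p (a, b) /\
    exists y, is_min lt b y /\ y \notin a.

End VB.

(* Main.v *)
Require Import Defs.
From HB Require Import structures.
From mathcomp Require Import all_boot all_order all_algebra finmap boolp Rstruct.
From Stdlib Require Import Reals.
From mathcomp Require Import ring lra zify.
Set Implicit Arguments. Unset Strict Implicit. Unset Printing Implicit Defensive.
Import Order.TTheory GRing.Theory Num.Theory.
Local Open Scope fset_scope.
Local Open Scope ring_scope.


Section Geo.
Variable m : nat.
Local Notation pt := (Defs.pt m).
Local Notation fsub := (Defs.fsub m).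

Lemma sum_ind (S : fsub) (t0 : pt) (g : pt -> R) :
  t0 \in S -> \sum_(t <- S) (t == t0)%:R * g t = g t0.
Proof.
move=> tS; rewrite (big_fsetD1 t0) //= eqxx mul1r big1_seq ?addr0 //.
by move=> t /andP[_]; rewrite in_fsetD1 => /andP[/negbTE -> _]; rewrite mul0r.
Qed.

Lemma sum_ind1 (S : fsub) (t0 : pt) :
  t0 \in S -> \sum_(t <- S) ((t == t0)%:R : R) = 1.
Proof.
move=> tS; rewrite -[RHS](sum_ind (fun _ => 1) tS); apply: eq_bigr => t _; by rewrite mulr1.
Qed.

Lemma newton_pt (S : fsub) (s : pt) : s \in S -> newton S (embed s).
Proof.
move=> sS; exists (fun t => (t == s)%:R); split; first by move=> t; rewrite ler0n.
split; first exact: sum_ind1.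
by move=> i; rewrite (sum_ind (fun t => ((t i)%:R : R))).
Qed.

Lemma newton_hull (S T : fsub) x :
  (forall s, s \in S -> newton T (embed s)) -> newton S x -> newton T x.
Proof.
move=> H [lam [l0 [l1 l2]]].
have: forall s : pt, exists mu : pt -> R, s \in S ->
   (forall t, 0 <= mu t) /\ \sum_(t <- T) mu t = 1 /\
   forall i, \sum_(t <- T) mu t * ((t i)%:R) <= (s i)%:R.
  move=> s; case: (boolP (s \in S)) => sS; last by exists (fun=> 0).
  by have [mu hm] := H s sS; exists mu.
move=> /choice [mu hmu].
exists (fun t => \sum_(s <- S) lam s * mu s t); split; [|split].
- move=> t; rewrite big_seq; apply: sumr_ge0 => s sS.
  by apply: mulr_ge0; [exact: l0 | exact: (hmu s sS).1].
- rewrite exchange_big /= -l1 big_seq [RHS]big_seq; apply: eq_bigr => s sS.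
  by rewrite -mulr_sumr (hmu s sS).2.1 mulr1.
- move=> i; apply: le_trans (l2 i).
  under eq_bigr do rewrite mulr_suml.
  rewrite exchange_big /= big_seq [X in _ <= X]big_seq; apply: ler_sum => s sS.
  under eq_bigr do rewrite -mulrA.
  rewrite -mulr_sumr; apply: ler_wpM2l; first exact: l0.
  exact: (hmu s sS).2.2 i.
Qed.

Lemma newton_mono (S T : fsub) x : S `<=` T -> newton S x -> newton T x.
Proof.
move=> ST; apply: newton_hull => s sS; apply: newton_pt; exact: (fsubsetP ST).
Qed.


Lemma lam_le1 (S : fsub) (lam : pt -> R) t0 :
  (forall s, 0 <= lam s) -> \sum_(s <- S) lam s = 1 -> t0 \in S -> lam t0 <= 1.
Proof.
move=> l0 l1 tS; rewrite -l1 (big_fsetD1 t0) //= lerDl.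
by apply: sumr_ge0 => s _; exact: l0.
Qed.

Lemma newton_ext (S : fsub) x (lam : pt -> R) :
  is_vertex S x -> (forall s, 0 <= lam s) -> \sum_(s <- S) lam s = 1 ->
  (forall i, \sum_(s <- S) lam s * ((s i)%:R) <= x i) ->
  forall t0, t0 \in S -> 0 < lam t0 -> forall i, x i = (t0 i)%:R.
Proof.
move=> [_ hv] l0 l1 l2 t0 t0S lt0.
pose z := fun i => \sum_(s <- S) lam s * ((s i)%:R : R).
have nz : newton S z by exists lam.
have xz : forall i, x i = z i.
  have n2 : newton S (fun i => 2 * x i - z i).
    exists lam; do 2 split => //; move=> i; have := l2 i; rewrite /z; lra.
  move=> i; have := hv _ _ n2 nz.
  have mid : forall i, x i = ((2 * x i - z i) + z i) / 2 by move=> j; lra.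
  by move=> /(_ mid i); lra.
pose k := lam t0. have k0 : 0 < k := lt0.
have k1 : k <= 1 by exact: (lam_le1 l0 l1 t0S).
have ny : newton S (fun i => (1 - k) * x i + k * (t0 i)%:R).
  exists (fun t => (1 - k) * lam t + k * (t == t0)%:R); split; [|split].
  - move=> t; apply: addr_ge0; apply: mulr_ge0; rewrite ?ler0n //.
    + by lra.
    + exact: l0.
  - by rewrite /= big_split /= -!mulr_sumr l1 sum_ind1 //; lra.
  - move=> i; rewrite xz; under eq_bigr do rewrite mulrDl -!mulrA.
    by rewrite big_split /= -!mulr_sumr sum_ind.
have nw : newton S (fun i => (1 + k) * x i - k * (t0 i)%:R).
  exists (fun t => (1 + k) * lam t - k * (t == t0)%:R); split; [|split].
  - move=> t; have [->|ne] := eqVneq t t0.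
    + change (true%:R : R) with (1 : R); rewrite mulr1 -/k; have kk : 0 <= k * k by apply: mulr_ge0; apply: ltW.
      lra.
    + rewrite mulr0 subr0; apply: mulr_ge0; [lra|exact: l0].
  - rewrite /= big_split /= -!mulr_sumr l1 sumrN -mulr_sumr sum_ind1 //; lra.
  - move=> i; rewrite xz; under eq_bigr do rewrite mulrBl -!mulrA.
    by rewrite big_split /= sumrN -!mulr_sumr sum_ind.
move=> i; have := hv _ _ ny nw.
have mid : forall i, x i = (((1 - k) * x i + k * (t0 i)%:R) + ((1 + k) * x i - k * (t0 i)%:R)) / 2.
  by move=> j; lra.
move=> /(_ mid i) h.
have : k * ((t0 i)%:R - x i) = 0 by lra.
by move/eqP; rewrite mulf_eq0 gt_eqF //= subr_eq0 => /eqP.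
Qed.


Lemma inVert (S : fsub) p : (p \in Vert S) = (p \in S) && `[< is_vertex S (embed p) >].
Proof. by rewrite !inE. Qed.

Lemma Vert_sub (S : fsub) : Vert S `<=` S.
Proof. by apply/fsubsetP => p; rewrite inVert => /andP[]. Qed.

Lemma embed_inj (p t : pt) : (forall i, (p i)%:R = (t i)%:R :> R) -> p = t.
Proof. by move=> h; apply/ffunP => i; apply/eqP; rewrite -(eqr_nat R); apply/eqP. Qed.

Lemma newton_nonempty (S : fsub) x : newton S x -> exists t, t \in S.
Proof.
move=> [lam [_ [l1 _]]]; case: (pselect (exists t, t \in S)) => // hn.
have : S = fset0.
  by apply/fsetP => t; rewrite inE; apply/negP => tS; apply: hn; exists t.
by move=> S0; move: l1; rewrite S0 big_seq_fset0 => /eqP; rewrite eq_sym oner_eq0.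
Qed.

Lemma pos_weight (S : fsub) (lam : pt -> R) :
  \sum_(s <- S) lam s = 1 -> exists2 t, t \in S & 0 < lam t.
Proof.
move=> l1; case: (pselect (exists2 t, t \in S & 0 < lam t)) => // hn.
have : \sum_(s <- S) lam s <= 0.
  rewrite big_seq; apply: sumr_le0 => s sS; rewrite leNgt; apply/negP => h.
  by apply: hn; exists s.
by rewrite l1; lra.
Qed.

Lemma vertex_pt (S : fsub) x : is_vertex S x -> exists2 t, t \in S & forall i, x i = (t i)%:R.
Proof.
move=> hv; have [[lam [l0 [l1 l2]]] _] := hv.
have [t tS lt] := pos_weight l1.
by exists t => //; apply: (newton_ext hv l0 l1 l2 tS lt).
Qed.

Lemma vertex_eq (A B : fsub) x : (forall x, newton A x <-> newton B x) ->
  is_vertex A x -> is_vertex B x.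
Proof.
move=> H [nA hv]; split; first by apply/H.
by move=> y z ny nz; apply: hv; apply/H.
Qed.

Lemma Vert_eq (A B : fsub) : (forall x, newton A x <-> newton B x) -> Vert A = Vert B.
Proof.
move=> H.
have H' : forall x, newton B x <-> newton A x by move=> x; split => /H.
have key : forall (A B : fsub), (forall x, newton A x <-> newton B x) ->
    forall p, p \in Vert A -> p \in Vert B.
  move=> A0 B0 h p; rewrite !inVert => /andP[pA /asboolP vA].
  have vB := vertex_eq h vA.
  have [t tB ht] := vertex_pt vB.
  have -> : p = t by apply: embed_inj.
  by rewrite tB; apply/asboolP; rewrite -(embed_inj ht).
by apply/fsetP => p; apply/idP/idP; apply: key.
Qed.

Lemma newton_remove (S : fsub) s : s \in S -> ~ is_vertex S (embed s) ->
  newton (S `\ s) (embed s).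
Proof.
move=> sS nv; have ns := newton_pt sS.
have : exists y z, newton S y /\ newton S z /\ (forall i, embed s i = (y i + z i) / 2)
   /\ exists i, y i <> z i.
  case: (pselect (exists y z, newton S y /\ newton S z /\ (forall i, embed s i = (y i + z i) / 2)
   /\ exists i, y i <> z i)) => // h; exfalso; apply: nv; split => // y z ny nz mid i.
  case: (pselect (y i = z i)) => // neq; exfalso; apply: h.
  by exists y, z; do 3 split => //; exists i.
move=> [y [z [[la [la0 [la1 la2]]] [[mu [mu0 [mu1 mu2]]] [mid [i0 neq]]]]]].
have las : la s + \sum_(t <- S `\ s) la t = 1 by move: la1; rewrite (big_fsetD1 s).
have mus : mu s + \sum_(t <- S `\ s) mu t = 1 by move: mu1; rewrite (big_fsetD1 s).
have la2' : forall i, la s * (s i)%:R + \sum_(t <- S `\ s) la t * (t i)%:R <= y i.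
  by move=> i; move: (la2 i); rewrite (big_fsetD1 s).
have mu2' : forall i, mu s * (s i)%:R + \sum_(t <- S `\ s) mu t * (t i)%:R <= z i.
  by move=> i; move: (mu2 i); rewrite (big_fsetD1 s).
have pos : forall (f : pt -> R) i, (forall t, 0 <= f t) -> 0 <= \sum_(t <- S `\ s) f t * (t i)%:R.
  by move=> f i f0; apply: sumr_ge0 => t _; apply: mulr_ge0; rewrite ?ler0n.
have laS0 : 0 <= \sum_(t <- S `\ s) la t by apply: sumr_ge0 => t _.
have muS0 : 0 <= \sum_(t <- S `\ s) mu t by apply: sumr_ge0 => t _.
have la0s := la0 s; have mu0s := mu0 s.
case: (ltP (la s + mu s) 2) => hk; last first.
  exfalso; apply: neq.
  have e1 : la s = 1 by lra.
  have e2 : mu s = 1 by lra.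
  have := la2' i0; have := mu2' i0; have := mid i0; have := pos la i0 la0; have := pos mu i0 mu0.
  rewrite e1 e2 /embed; lra.
pose d := 2 - (la s + mu s).
have d0 : 0 < d by rewrite /d; lra.
exists (fun t => (la t + mu t) / d); split; [|split].
- by move=> t; apply: divr_ge0; [apply: addr_ge0|apply: ltW].
- rewrite -mulr_suml big_split /=.
  have -> : \sum_(i <- S `\ s) la i + \sum_(i <- S `\ s) mu i = d by rewrite /d; lra.
  by rewrite mulfV // gt_eqF.
- move=> i; under eq_bigr do rewrite mulrAC.
  rewrite -mulr_suml ler_pdivrMr //.
  under eq_bigr do rewrite mulrDl.
  rewrite big_split /=.
  have := la2' i; have := mu2' i; have := mid i; rewrite /d /embed; lra.
Qed.

Lemma newton_Vert (S : fsub) x : newton S x -> newton (Vert S) x.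
Proof.
move: {2}#|`S| (leqnn #|`S|) => n; elim: n S x => [|n IH] S x hS.
  move=> nx; have [t tS] := newton_nonempty nx.
  by move: hS; rewrite (cardfsD1 t) tS.
apply: newton_hull => s sS.
case: (pselect (is_vertex S (embed s))) => hv.
  by apply: newton_pt; rewrite inVert sS; apply/asboolP.
have ns := newton_remove sS hv.
have eqP' : forall x, newton (S `\ s) x <-> newton S x.
  move=> y; split; first by apply: newton_mono; exact: fsubD1set.
  apply: newton_hull => t tS; case: (eqVneq t s) => [->//|ne].
  by apply: newton_pt; rewrite in_fsetD1 ne tS.
rewrite -(Vert_eq eqP'); apply: IH => //.
by move: hS; rewrite (cardfsD1 s) sS.
Qed.

Lemma newton_VertE (S : fsub) x : newton (Vert S) x <-> newton S x.
Proof. split; [apply: newton_mono; exact: Vert_sub | exact: newton_Vert]. Qed.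

Lemma Vert_idem (S : fsub) : Vert (Vert S) = Vert S.
Proof. by apply: Vert_eq; exact: newton_VertE. Qed.

Lemma Vert1 (v : pt) : Vert [fset v] = [fset v].
Proof.
apply/eqP; rewrite eqEfsubset Vert_sub /=; apply/fsubsetP => p; rewrite inE => /eqP ->.
rewrite inVert inE eqxx /=; apply/asboolP; split; first by apply: newton_pt; rewrite inE.
move=> y z [la [_ [la1 la2]]] [mu [_ [mu1 mu2]]] mid i.
move: la1 mu1 (la2 i) (mu2 i) (mid i); rewrite !big_seq_fset1 /embed => -> -> ; rewrite !mul1r; lra.
Qed.

Lemma Vert_nonempty (S : fsub) t : t \in S -> exists u, u \in Vert S.
Proof. by move=> tS; apply: (@newton_nonempty _ (embed t)); apply: newton_Vert; apply: newton_pt. Qed.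


Definition ssum (A B : fsub) : fsub := [fset padd x y | x in A, y in B].
Definition Pin (A B : fsub) := forall x, newton A x -> newton B x.

Lemma vmulE (A B : fsub) : vmul A B = Vert (ssum A B).
Proof. by []. Qed.

Lemma paddE (x y : pt) i : padd x y i = addn (x i) (y i).
Proof. by rewrite /padd ffunE. Qed.

Lemma pzeroE i : pzero m i = 0%N.
Proof. by rewrite /pzero ffunE. Qed.

Lemma paddC (x y : pt) : padd x y = padd y x.
Proof. by apply/ffunP => i; rewrite !paddE addnC. Qed.

Lemma paddA (x y z : pt) : padd x (padd y z) = padd (padd x y) z.
Proof. by apply/ffunP => i; rewrite !paddE addnA. Qed.

Lemma padd0 (x : pt) : padd x (pzero m) = x.
Proof. by apply/ffunP => i; rewrite paddE pzeroE addn0. Qed.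

Lemma padd0l (x : pt) : padd (pzero m) x = x.
Proof. by rewrite paddC padd0. Qed.

Lemma paddI (x y z : pt) : padd x z = padd y z -> x = y.
Proof. by move=> /ffunP h; apply/ffunP => i; move: (h i); rewrite !paddE => /addIn. Qed.

Lemma in_ssum (A B : fsub) z :
  reflect (exists x y, [/\ x \in A, y \in B & z = padd x y]) (z \in ssum A B).
Proof.
apply: (iffP (imfset2P _ _ _ _ _)).
  by move=> [x xA [y yB ->]]; exists x, y.
by move=> [x [y [xA yB ->]]]; exists x => //; exists y.
Qed.

Lemma mem_ssum (A B : fsub) x y : x \in A -> y \in B -> padd x y \in ssum A B.
Proof. by move=> xA yB; apply/in_ssum; exists x, y. Qed.

Lemma ssumC (A B : fsub) : ssum A B = ssum B A.
Proof.
by apply/fsetP => z; apply/in_ssum/in_ssum => [][x [y [xA yB ->]]]; exists y, x; rewrite paddC.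
Qed.

Lemma ssum1 (A : fsub) : ssum A [fset pzero m] = A.
Proof.
apply/fsetP => z; apply/in_ssum/idP => [[x [y [xA]]]|zA].
  by rewrite inE => /eqP -> ->; rewrite padd0.
by exists z, (pzero m); rewrite inE eqxx padd0.
Qed.

Lemma vmul1 (A : fsub) : vmul A (vone m) = Vert A.
Proof. by rewrite vmulE ssum1. Qed.

Lemma vmul1l (A : fsub) : vmul (vone m) A = Vert A.
Proof. by rewrite vmulE ssumC ssum1. Qed.

Lemma ssum0 (A : fsub) : ssum A fset0 = fset0.
Proof. by apply/fsetP => z; rewrite inE; apply/in_ssum => [][x [y [_]]]; rewrite inE. Qed.

Lemma ssum0l (A : fsub) : ssum fset0 A = fset0.
Proof. by rewrite ssumC ssum0. Qed.

Lemma Vert0 : Vert (fset0 : fsub) = fset0.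
Proof. by apply/fsetP => z; rewrite inVert inE. Qed.

Lemma push_sum (B T : fsub) (f : pt -> pt) (mu g : pt -> R) :
  (forall u, u \in B -> f u \in T) ->
  \sum_(w <- T) (\sum_(u <- B) mu u * (w == f u)%:R) * g w = \sum_(u <- B) mu u * g (f u).
Proof.
move=> hf; under eq_bigr do rewrite mulr_suml.
rewrite exchange_big /= big_seq [RHS]big_seq; apply: eq_bigr => u uB.
under eq_bigr do rewrite -mulrA.
by rewrite -mulr_sumr sum_ind //; apply: hf.
Qed.

Lemma newton_trans (B C : fsub) x t : newton B x -> t \in C ->
  newton (ssum B C) (fun i => x i + (t i)%:R).
Proof.
move=> [mu [mu0 [mu1 mu2]]] tC.
have hf : forall u, u \in B -> padd u t \in ssum B C by move=> u uB; apply: mem_ssum.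
exists (fun w => \sum_(u <- B) mu u * (w == padd u t)%:R); split; [|split].
- by move=> w; apply: sumr_ge0 => u _; apply: mulr_ge0; rewrite ?ler0n.
- have := push_sum mu (fun _ => 1) hf.
  under eq_bigr do rewrite mulr1.
  by move=> ->; under eq_bigr do rewrite mulr1.
- move=> i; rewrite (push_sum mu (fun w => ((w i)%:R : R)) hf).
  under eq_bigr do rewrite paddE natrD mulrDr.
  by rewrite big_split /= -mulr_suml mu1 mul1r lerD2r.
Qed.

Lemma newton_ssum (A B C : fsub) : Pin A B -> Pin (ssum A C) (ssum B C).
Proof.
move=> hAB x; apply: newton_hull => r /in_ssum [s [t [sA tC ->]]].
have nB := hAB _ (newton_pt sA).
have := newton_trans nB tC.
have -> : (fun i => embed s i + (t i)%:R) = embed (padd s t).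
  by apply: funext => i; rewrite /embed paddE natrD.
by [].
Qed.

Lemma Pin_trans (A B C : fsub) : Pin A B -> Pin B C -> Pin A C.
Proof. by move=> h1 h2 x /h1 /h2. Qed.

Lemma Pin_union (A B : fsub) : Pin A B -> Pin (A `|` B) B.
Proof.
move=> hAB x; apply: newton_hull => s; rewrite inE => /orP[sA|sB].
  by apply: hAB; apply: newton_pt.
by apply: newton_pt.
Qed.

Lemma isVB_Vert (S : fsub) : isVB (Vert S).
Proof. exact: Vert_idem. Qed.

Lemma Vert_union (a b : fsub) : isVB b -> (Vert (a `|` b) = b <-> Pin a b).
Proof.
move=> vb; split => [h x na|h].
  have : newton (a `|` b) x by apply: newton_mono na; exact: fsubsetUl.
  by move/newton_Vert; rewrite h.
rewrite -[RHS]vb; apply: Vert_eq => x; split; first by apply: Pin_union.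
by apply: newton_mono; exact: fsubsetUr.
Qed.

Lemma frac_le_one (a b : fsub) : isVB a -> isVB b ->
  (frac_le (a, b) (fone m) <-> Vert (a `|` b) = b).
Proof.
move=> va vb; rewrite /frac_le /frac_eq /frac_add /fone /=.
rewrite !vmul1 !vmul1l /vadd !Vert_idem va vb.
by [].
Qed.

Lemma circP (a b : fsub) :
  circ (a, b) <-> [/\ isVB a, isVB b, b <> fset0 & Pin a b].
Proof.
split.
  move=> [[va [vb b0]] le]; split => //.
  by apply/(Vert_union a vb); apply/(frac_le_one va vb).
move=> [va vb b0 h]; split; first by [].
by apply/(frac_le_one va vb); apply/(Vert_union a vb).
Qed.

Lemma ne0P (A : fsub) : A <> fset0 <-> exists t, t \in A.
Proof.
split => [h|[t tA] e]; last by move: tA; rewrite e inE.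
case: (pselect (exists t, t \in A)) => // hn; exfalso; apply: h.
by apply/fsetP => t; rewrite inE; apply/negP => tA; apply: hn; exists t.
Qed.

Lemma vmul_ne0 (A B : fsub) : A <> fset0 -> B <> fset0 -> vmul A B <> fset0.
Proof.
move=> /ne0P [x xA] /ne0P [y yB]; apply/ne0P.
by apply: (Vert_nonempty (mem_ssum xA yB)).
Qed.

Lemma Pin_vmul (a b c d : fsub) : Pin a b -> Pin c d -> Pin (vmul a c) (vmul b d).
Proof.
move=> h1 h2 x; rewrite !vmulE => /newton_VertE nx; apply/newton_VertE.
have := newton_ssum h1 nx; rewrite ssumC => /(newton_ssum h2); by rewrite ssumC.
Qed.

Lemma circ_mul (p q : Defs.frac m) : circ p -> circ q -> circ (frac_mul p q).
Proof.
case: p => a b; case: q => c d; rewrite /frac_mul /= => /circP [va vb b0 h1] /circP [vc vd d0 h2].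
apply/circP; split; [exact: isVB_Vert|exact: isVB_Vert|exact: vmul_ne0|exact: Pin_vmul].
Qed.

Lemma circ_add (p q : Defs.frac m) : circ p -> circ q -> circ (frac_add p q).
Proof.
case: p => a b; case: q => c d; rewrite /frac_add /= => /circP [va vb b0 h1] /circP [vc vd d0 h2].
apply/circP; split; [exact: isVB_Vert|exact: isVB_Vert|exact: vmul_ne0|].
move=> x /newton_VertE; apply: newton_hull => r; rewrite inE => /orP[] hr.
  have : Pin (vmul a d) (vmul b d) by apply: Pin_vmul => // y.
  by apply; apply: newton_pt.
have e : vmul d b = vmul b d by rewrite !vmulE ssumC.
rewrite -e; apply: (Pin_vmul h2 (fun y (hy : newton b y) => hy)); exact: newton_pt.
Qed.

Lemma isVB1 (v : pt) : isVB [fset v].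
Proof. exact: Vert1. Qed.

Lemma circ_fzero : circ (fzero m).
Proof.
apply/circP; split; [exact: Vert0|exact: isVB1| |].
  by apply/ne0P; exists (pzero m); rewrite inE.
by move=> x /newton_nonempty [t]; rewrite inE.
Qed.

Lemma circ_fone : circ (fone m).
Proof.
apply/circP; split; [exact: isVB1|exact: isVB1| |by []].
by apply/ne0P; exists (pzero m); rewrite inE.
Qed.

End Geo.


Section Val.
Variable m : nat.
Local Notation pt := (Defs.pt m).
Local Notation fsub := (Defs.fsub m).
Local Notation frac := (Defs.frac m).
Implicit Types (lt : pt -> pt -> Prop).

Definition good lt := monomial_order lt /\ forall (S : fsub) y, is_min lt S y -> y \in Vert S.
Definition mpos lt (p : frac) := forall y, is_min lt p.2 y -> y \notin p.1.
Definition lee lt (a b : pt) := a = b \/ lt a b.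

Section MO.
Variable lt : pt -> pt -> Prop.
Hypothesis mo : monomial_order lt.

Lemma mo_irr a : ~ lt a a. Proof. by case: mo. Qed.
Lemma mo_trans a b c : lt a b -> lt b c -> lt a c.
Proof. by case: mo => _ [h _]; apply: h. Qed.
Lemma mo_total a b : a <> b -> lt a b \/ lt b a.
Proof. by case: mo => _ [_ [h _]]; apply: h. Qed.
Lemma mo_pos a : a <> pzero m -> lt (pzero m) a.
Proof. by case: mo => _ [_ [_ [h _]]]; apply: h. Qed.
Lemma mo_add a b c : lt a b -> lt (padd a c) (padd b c).
Proof. by case: mo => _ [_ [_ [_ h]]]; apply: h. Qed.
Lemma mo_addl a b c : lt a b -> lt (padd c a) (padd c b).
Proof. by rewrite ![padd c _]paddC; apply: mo_add. Qed.
Lemma mo_asym a b : lt a b -> lt b a -> False.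
Proof. by move=> h1 h2; apply: (@mo_irr a); apply: mo_trans h1 h2. Qed.
Lemma mo_neq a b : lt a b -> a <> b.
Proof. by move=> h e; subst; apply: (mo_irr h). Qed.
Lemma lee_lt_trans a b c : lee lt a b -> lt b c -> lt a c.
Proof. by case=> [->//|h1 h2]; apply: mo_trans h1 h2. Qed.
Lemma lt_lee_trans a b c : lt a b -> lee lt b c -> lt a c.
Proof. by move=> h1 [<-//|h2]; apply: mo_trans h1 h2. Qed.
Lemma lt_add_lee a b c d : lt a b -> lee lt c d -> lt (padd a c) (padd b d).
Proof.
move=> h1 h2; apply: (@lt_lee_trans _ (padd b c)); first exact: mo_add.
by case: h2 => [->|h2]; [left|right; apply: mo_addl].
Qed.
Lemma lee_add a b c d : lee lt a b -> lee lt c d -> lee lt (padd a c) (padd b d).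
Proof.
case=> [->|h1] h2; last by right; apply: lt_add_lee.
by case: h2 => [->|h2]; [left|right; apply: mo_addl].
Qed.
Lemma mo_cancel a b c : lt (padd a c) (padd b c) -> lt a b.
Proof.
move=> h; case: (pselect (a = b)) => [e|ne]; first by subst; case: (mo_irr h).
by case: (mo_total ne) => // h'; case: (mo_asym h (mo_add c h')).
Qed.
Lemma lee_total a b : lee lt a b \/ lt b a.
Proof.
case: (pselect (a = b)) => [->|ne]; first by left; left.
by case: (mo_total ne) => h; [left; right|right].
Qed.

Lemma ex_min_seq (s : seq pt) : s <> [::] ->
  exists y, y \in s /\ forall z, z \in s -> z <> y -> lt y z.
Proof.
elim: s => [//|a s IH] _.
case: (pselect (s = [::])) => [->|ne].
  by exists a; split; rewrite ?inE ?eqxx // => z; rewrite inE => /eqP.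
have [y [ys hy]] := IH ne.
case: (lee_total a y) => h.
  exists a; split; first by rewrite inE eqxx.
  move=> z; rewrite inE => /orP[/eqP-> aa|zs za]; first by case: aa.
  case: (pselect (z = y)) => [e|zy]; first by subst z; case: h => // e; case: za.
  by apply: lee_lt_trans h (hy _ zs zy).
exists y; split; first by rewrite inE ys orbT.
move=> z; rewrite inE => /orP[/eqP-> ay|zs zy]; last exact: hy.
exact: h.
Qed.

Lemma ex_min (S : fsub) t : t \in S -> exists y, is_min lt S y.
Proof.
move=> tS; have : (S : seq pt) <> [::] by move=> e; move: tS; rewrite -[_ \in S]/(t \in (S : seq pt)) e.
by move=> /ex_min_seq [y [yS hy]]; exists y; split.
Qed.

Lemma min_uniq (S : fsub) x y : is_min lt S x -> is_min lt S y -> x = y.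
Proof.
move=> [xS hx] [yS hy]; case: (pselect (x = y)) => // ne.
by case: (mo_asym (hy _ xS ne) (hx _ yS (nesym ne))).
Qed.

Lemma min_le (S : fsub) y z : is_min lt S y -> z \in S -> lee lt y z.
Proof.
move=> [_ h] zS; case: (pselect (z = y)) => [->|ne]; first by left.
by right; apply: h.
Qed.

Lemma is_minI (T : fsub) y : y \in T -> (forall z, z \in T -> lee lt y z) -> is_min lt T y.
Proof. by move=> yT h; split => // z zT ne; case: (h z zT) => // e; case: ne. Qed.

Lemma min_ssum (A B : fsub) x y : is_min lt A x -> is_min lt B y ->
  is_min lt (ssum A B) (padd x y).
Proof.
move=> hx hy; apply: is_minI; first by apply: mem_ssum; [case: hx|case: hy].
by move=> z /in_ssum [a [b [aA bB ->]]]; apply: lee_add; [apply: (min_le hx)|apply: (min_le hy)].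
Qed.

End MO.

Section Good.
Variable lt : pt -> pt -> Prop.
Hypothesis gd : good lt.
Let mo : monomial_order lt := gd.1.

Lemma min_inVert (S : fsub) y : is_min lt S y -> y \in Vert S.
Proof. exact: gd.2. Qed.

Lemma min_sub (S T : fsub) y : y \in T -> T `<=` S -> is_min lt S y -> is_min lt T y.
Proof. by move=> yT TS [_ h]; split => // z zT; apply: h; apply: (fsubsetP TS). Qed.

Lemma min_Vert (S : fsub) y : is_min lt S y -> is_min lt (Vert S) y.
Proof. by move=> h; apply: (min_sub (min_inVert h) (Vert_sub S) h). Qed.

Lemma min_vmul (A B : fsub) x y : is_min lt A x -> is_min lt B y ->
  is_min lt (vmul A B) (padd x y).
Proof. by move=> hx hy; rewrite vmulE; apply: min_Vert; apply: min_ssum. Qed.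

Lemma circ_ne (a b : fsub) : circ (a, b) -> exists y, is_min lt b y.
Proof. by move=> /circP [_ _ /ne0P [t tb] _]; apply: (ex_min mo tb). Qed.

Lemma circ_ge (a b : fsub) y x : circ (a, b) -> is_min lt b y -> x \in a -> lee lt y x.
Proof.
move=> /circP [va vb _ hP] hy xa.
have hV := proj2 (Vert_union a vb) hP.
have yU : y \in a `|` b by rewrite inE; case: hy => -> _; rewrite orbT.
have [y' hy'] := ex_min mo yU.
have y'b : y' \in b by rewrite -hV; apply: min_inVert.
have e : y' = y.
  apply: (min_uniq mo _ hy); split => //.
  move=> z zb; case: hy' => _ h; apply: h; by rewrite inE zb orbT.
by subst y'; apply: (min_le hy'); rewrite inE xa.
Qed.

Lemma mpos_lt (a b : fsub) y x : circ (a, b) -> mpos lt (a, b) -> is_min lt b y ->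
  x \in a -> lt y x.
Proof.
move=> c hp hy xa; case: (circ_ge c hy xa) => // e; subst x.
by move: (hp _ hy); rewrite /= xa.
Qed.

Lemma ssum_vmul_sub (A B : fsub) z : z \in vmul A B ->
  exists x y, [/\ x \in A, y \in B & z = padd x y].
Proof. by rewrite vmulE => /(fsubsetP (Vert_sub _)) /in_ssum. Qed.

Lemma mpos_add (a b c d : fsub) : circ (a, b) -> circ (c, d) -> mpos lt (a, b) ->
  mpos lt (c, d) -> mpos lt (frac_add (a, b) (c, d)).
Proof.
move=> cp cq pp pq y /= hy.
have [yb hb] := circ_ne cp; have [yd hd] := circ_ne cq.
have e := min_uniq mo hy (min_vmul hb hd); subst y.
apply/negP; rewrite /vadd => /(fsubsetP (Vert_sub _)); rewrite inE => /orP[] /ssum_vmul_sub [x [z [xA zB e]]].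
  have := lt_add_lee mo (mpos_lt cp pp hb xA) (min_le hd zB).
  by rewrite -e; apply: mo_irr.
have := lt_add_lee mo (mpos_lt cq pq hd xA) (min_le hb zB).
by rewrite -e paddC; apply: mo_irr.
Qed.

Lemma min_of_ge (a b : fsub) y : circ (a, b) -> is_min lt b y -> y \in a -> is_min lt a y.
Proof. by move=> c hy ya; apply: is_minI => // x xa; apply: (circ_ge c hy xa). Qed.

Lemma mpos_add_inv (a b c d : fsub) : circ (a, b) -> circ (c, d) ->
  mpos lt (frac_add (a, b) (c, d)) -> mpos lt (a, b) /\ mpos lt (c, d).
Proof.
move=> cp cq hs.
have [yb hb] := circ_ne cp; have [yd hd] := circ_ne cq.
have hden : is_min lt (vmul b d) (padd yb yd) := min_vmul hb hd.
have key : forall w, is_min lt (vmul a d `|` vmul c b) w -> w = padd yb yd -> False.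
  move=> w hw e; subst w; move: (hs _ hden) => /=; rewrite /vadd.
  by move/negP; apply; apply: min_inVert.
split => y /= hy; apply/negP => ya.
  have e := min_uniq mo hy hb; subst y.
  apply: (key (padd yb yd)) => //; apply: is_minI.
    by rewrite inE; apply/orP; left; case: (min_vmul (min_of_ge cp hb ya) hd).
  move=> z; rewrite inE => /orP[] /ssum_vmul_sub [x [u [xA uB ->]]].
    by apply: (lee_add mo); [apply: (circ_ge cp hb xA)|apply: (min_le hd uB)].
  rewrite [padd yb yd]paddC.
  by apply: (lee_add mo); [apply: (circ_ge cq hd xA)|apply: (min_le hb uB)].
have e := min_uniq mo hy hd; subst y.
apply: (key (padd yb yd)) => //; apply: is_minI.
  rewrite inE; apply/orP; right; rewrite paddC.
  by case: (min_vmul (min_of_ge cq hd ya) hb).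
move=> z; rewrite inE => /orP[] /ssum_vmul_sub [x [u [xA uB ->]]].
  by apply: (lee_add mo); [apply: (circ_ge cp hb xA)|apply: (min_le hd uB)].
rewrite [padd yb yd]paddC.
by apply: (lee_add mo); [apply: (circ_ge cq hd xA)|apply: (min_le hb uB)].
Qed.

Lemma mpos_mul (r1 r2 a b : fsub) : circ (r1, r2) -> circ (a, b) -> mpos lt (a, b) ->
  mpos lt (frac_mul (r1, r2) (a, b)).
Proof.
move=> cr cp pp y /= hy.
have [yr hr] := circ_ne cr; have [yb hb] := circ_ne cp.
have e := min_uniq mo hy (min_vmul hr hb); subst y.
apply/negP => /ssum_vmul_sub [x [z [xA zB e]]].
have := lt_add_lee mo (mpos_lt cp pp hb zB) (circ_ge cr hr xA).
by rewrite paddC [padd z x]paddC -e; apply: mo_irr.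
Qed.

Lemma vmul_min_ne (A B : fsub) w : is_min lt (vmul A B) w -> exists x, x \in A.
Proof. by case=> /ssum_vmul_sub [x [y [xA _ _]]] _; exists x. Qed.

Lemma mpos_eq (p1 p2 q1 q2 : fsub) : circ (p1, p2) -> circ (q1, q2) ->
  frac_eq (p1, p2) (q1, q2) -> mpos lt (p1, p2) -> mpos lt (q1, q2).
Proof.
rewrite /frac_eq /= => cp cq e pp y /= hy; apply/negP => yq.
have hq1 := min_of_ge cq hy yq.
have [yp hp] := circ_ne cp.
have h1 := min_vmul hq1 hp; rewrite -e in h1.
have [x xp] := vmul_min_ne h1.
have [xm hx] := ex_min mo xp.
have := min_uniq mo h1 (min_vmul hx hy).
rewrite paddC => /paddI ex; subst xm.
have := mpos_lt cp pp hp (proj1 hx); apply: (mo_irr mo).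
Qed.

Lemma mpos_eq2 (p1 p2 a b : fsub) y0 : circ (p1, p2) -> frac_eq (p1, p2) (a, b) ->
  is_min lt b y0 -> y0 \notin a -> mpos lt (p1, p2).
Proof.
rewrite /frac_eq /= => cp e hb y0a y /= hy; apply/negP => yp.
have hp1 := min_of_ge cp hy yp.
have h1 := min_vmul hp1 hb; rewrite e in h1.
have [x xa] := vmul_min_ne h1.
have [xm hx] := ex_min mo xa.
have := min_uniq mo h1 (min_vmul hx hy).
rewrite [padd y y0]paddC => /paddI ex; subst xm.
by move: y0a; case: hx => ->.
Qed.

Lemma mpos_fzero : mpos lt (fzero m).
Proof. by move=> y _; rewrite inE. Qed.

Lemma not_mpos_fone : ~ mpos lt (fone m).
Proof.
move=> h; have hm : is_min lt (vone m) (pzero m).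
  by split; [rewrite inE|move=> z; rewrite inE => /eqP].
by move: (h _ hm); rewrite /= inE eqxx.
Qed.

Definition Y (u v : pt) : frac := ([fset v], vadd [fset u] [fset v]).

Lemma min2 (u v : pt) : lee lt u v -> is_min lt ([fset u] `|` [fset v]) u.
Proof.
move=> h; apply: is_minI; first by rewrite !inE eqxx.
by move=> z; rewrite !inE => /orP[] /eqP ->; [left|].
Qed.

Lemma lt_mposY u v : lt u v -> mpos lt (Y u v).
Proof.
move=> h y /= hy.
have e := min_uniq mo hy (min_Vert (min2 (or_intror h))); subst y.
rewrite in_fset1. apply/negP => /eqP e. exact: (mo_neq mo h e).
Qed.

Lemma mposY_lt u v : mpos lt (Y u v) -> lt u v.
Proof.
move=> h; case: (lee_total mo u v) => [[e|//]|h2].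
  subst v; have := h u (min_Vert (min2 (or_introl erefl))).
  by rewrite /= inE eqxx.
have hv : is_min lt ([fset u] `|` [fset v]) v.
  rewrite fsetUC; apply: min2; by right.
by move: (h v (min_Vert hv)); rewrite /= inE eqxx.
Qed.

End Good.

Lemma circY (u v : pt) : circ (Y u v).
Proof.
apply/circP; split; [exact: isVB1|exact: isVB_Vert| |].
  by apply/ne0P; apply: (@Vert_nonempty _ _ u); rewrite !inE eqxx.
move=> x nx; apply: newton_Vert.
by apply: newton_mono nx; apply: fsubsetUr.
Qed.

End Val.


Section Ord.
Variable m : nat.
Local Notation pt := (Defs.pt m).
Local Notation fsub := (Defs.fsub m).

Definition dotp (c : 'I_m -> R) (u : pt) : R := \sum_i c i * (u i)%:R.
Definition lexlt (u v : pt) : Prop :=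
  exists j : 'I_m, ((u j : nat) < (v j : nat))%nat /\ forall i : 'I_m, (i < j)%nat -> u i = v i.
Definition ltc (c : 'I_m -> R) (u v : pt) : Prop :=
  dotp c u < dotp c v \/ (dotp c u = dotp c v /\ lexlt u v).

Lemma lexlt_irr u : ~ lexlt u u.
Proof. by case=> j [h _]; rewrite ltnn in h. Qed.

Lemma lexlt_trans u v w : lexlt u v -> lexlt v w -> lexlt u w.
Proof.
move=> [j1 [h1 e1]] [j2 [h2 e2]].
case: (ltngtP j1 j2) => c.
- exists j1; split; first by rewrite -(e2 j1 c).
  by move=> i ij; rewrite e1 // e2 //; apply: ltn_trans ij c.
- exists j2; split; first by rewrite (e1 j2 c).
  by move=> i ij; rewrite e1 ?e2 //; apply: ltn_trans ij c.
- have e : j1 = j2 by apply: val_inj.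
  subst j2; exists j1; split; first by apply: ltn_trans h1 h2.
  by move=> i ij; rewrite e1 ?e2.
Qed.

Lemma lexlt_total u v : u <> v -> lexlt u v \/ lexlt v u.
Proof.
move=> ne.
have [j0 hj0] : exists j, u j != v j.
  case: (pselect (exists j, u j != v j)) => // hn; case: ne.
  apply/ffunP => j; apply/eqP; case: (boolP (u j == v j)) => // h; case: hn; by exists j.
case: (@arg_minnP _ j0 (fun j => u j != v j) (fun j : 'I_m => val j) hj0) => j hj hmin.
have below : forall i : 'I_m, (i < j)%nat -> u i = v i.
  move=> i ij; apply/eqP; case: (boolP (u i == v i)) => // h.
  by have := hmin i h; rewrite leqNgt ij.
case: (ltngtP (u j) (v j)) => c.
- by left; exists j.
- by right; exists j; split => // i ij; rewrite below.
- by move: hj; rewrite c eqxx.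
Qed.

Lemma lexlt_add u v w : lexlt u v -> lexlt (padd u w) (padd v w).
Proof.
move=> [j [h e]]; exists j; split; first by rewrite !paddE ltn_add2r.
by move=> i ij; rewrite !paddE e.
Qed.

Lemma dotpD c u v : dotp c (padd u v) = dotp c u + dotp c v.
Proof.
rewrite /dotp -big_split /=; apply: eq_bigr => i _.
by rewrite paddE natrD mulrDr.
Qed.

Lemma dotp_pos c u : (forall i, 0 < c i) -> u <> pzero m -> 0 < dotp c u.
Proof.
move=> c0 ne.
have [j hj] : exists j, u j != 0%N.
  case: (pselect (exists j, u j != 0%N)) => // hn; case: ne.
  apply/ffunP => j; rewrite pzeroE; apply/eqP; case: (boolP (u j == 0%N)) => // h.
  by case: hn; exists j.
rewrite /dotp (bigD1 j) //=.
have h1 : 0 < c j * (u j)%:R by apply: mulr_gt0 => //; rewrite ltr0n lt0n.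
have h2 : 0 <= \sum_(i | i != j) c i * (u i)%:R.
  by apply: sumr_ge0 => i _; apply: mulr_ge0; [apply: ltW|rewrite ler0n].
lra.
Qed.

Lemma ltc_mono c : (forall i, 0 < c i) -> monomial_order (ltc c).
Proof.
move=> c0; split.
  by move=> x [h|[_ h]]; [rewrite ltxx in h|apply: (lexlt_irr h)].
split.
  move=> x y z [h1|[e1 h1]] [h2|[e2 h2]].
  - by left; apply: lt_trans h1 h2.
  - by left; rewrite -e2.
  - by left; rewrite e1.
  - by right; split; [rewrite e1 e2|apply: lexlt_trans h1 h2].
split.
  move=> x y ne; case: (ltgtP (dotp c x) (dotp c y)) => h.
  - by left; left.
  - by right; left.
  - by case: (lexlt_total ne) => h'; [left|right]; right; split.
split.
  by move=> a ne; left; rewrite /dotp big1 ?dotp_pos // => i _; rewrite pzeroE mulr0.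
move=> a b d [h|[e h]].
  by left; rewrite !dotpD ltrD2r.
by right; split; [rewrite !dotpD e|apply: lexlt_add].
Qed.


Lemma eq_ler_sub (a b : R) : a <= b -> 0 <= b - a.
Proof. by rewrite subr_ge0. Qed.

Lemma sum_seq_eq0 (S : fsub) (F : pt -> R) : (forall s, s \in S -> 0 <= F s) ->
  \sum_(s <- S) F s = 0 -> forall s, s \in S -> F s = 0.
Proof.
move=> h0; rewrite big_seq => /eqP; rewrite psumr_eq0 // => /allP h s sS.
by have := h s sS; rewrite sS /= => /eqP.
Qed.

Lemma ltc_F2 c : (forall i, 0 < c i) -> forall (S : fsub) y, is_min (ltc c) S y -> y \in Vert S.
Proof.
move=> c0 S y hy; have [yS hmin] := hy.
rewrite inVert yS; apply/asboolP; split; first exact: newton_pt.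
move=> p q [la [la0 [la1 la2]]] [mu [mu0 [mu1 mu2]]] mid.
pose nu s := (la s + mu s) / 2.
have nu0 : forall s, 0 <= nu s.
  by move=> s; rewrite /nu; have := la0 s; have := mu0 s; lra.
have nu1 : \sum_(s <- S) nu s = 1.
  rewrite /nu -mulr_suml big_split /= la1 mu1; lra.
have nu2 : forall i, \sum_(s <- S) nu s * (s i)%:R = (\sum_(s <- S) la s * (s i)%:R + \sum_(s <- S) mu s * (s i)%:R) / 2.
  move=> i; rewrite -big_split /= mulr_suml; apply: eq_bigr => s _; rewrite /nu; field; by [].
have nu3 : forall i, \sum_(s <- S) nu s * (s i)%:R <= (y i)%:R.
  move=> i; rewrite nu2; have := la2 i; have := mu2 i; have := mid i; rewrite /embed; lra.
have dy : forall s, s \in S -> dotp c y <= dotp c s.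
  move=> s sS; case: (pselect (s = y)) => [->//|ne].
  by case: (hmin s sS ne) => [h|[e _]]; [apply: ltW|rewrite e].
have E : \sum_(s <- S) nu s * (dotp c s - dotp c y) =
         - \sum_i c i * ((y i)%:R - \sum_(s <- S) nu s * (s i)%:R).
  under eq_bigr do rewrite mulrBr.
  rewrite sumrB -mulr_suml nu1 mul1r.
  under [X in _ = - X]eq_bigr do rewrite mulrBr.
  rewrite sumrB opprB /dotp; congr (_ - _).
  under eq_bigr do rewrite mulr_sumr.
  rewrite exchange_big /=; apply: eq_bigr => i _.
  by rewrite mulr_sumr; apply: eq_bigr => s _; rewrite mulrCA.
have hLge : 0 <= \sum_(s <- S) nu s * (dotp c s - dotp c y).
  rewrite big_seq; apply: sumr_ge0 => s sS; apply: mulr_ge0 => //.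
  by rewrite subr_ge0; apply: dy.
have hRge : 0 <= \sum_i c i * ((y i)%:R - \sum_(s <- S) nu s * (s i)%:R).
  apply: sumr_ge0 => i _; apply: mulr_ge0; [apply: ltW; apply: c0|rewrite subr_ge0; apply: nu3].
have LE : \sum_(s <- S) nu s * (dotp c s - dotp c y) = 0.
  apply: le_anti; rewrite hLge andbT E oppr_le0; exact: hRge.
have RE : \sum_i c i * ((y i)%:R - \sum_(s <- S) nu s * (s i)%:R) = 0.
  by apply: le_anti; rewrite hRge andbT -oppr_ge0 -E.
have iii : forall i, \sum_(s <- S) nu s * (s i)%:R = (y i)%:R.
  move=> i.
  have h0 : forall j, true -> 0 <= c j * ((y j)%:R - \sum_(s <- S) nu s * (s j)%:R).
    by move=> j _; apply: mulr_ge0; [apply: ltW; apply: c0|rewrite subr_ge0; apply: nu3].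
  have := psumr_eq0P h0 RE (i := i) isT.
  by move/eqP; rewrite mulf_eq0 (gt_eqF (c0 i)) /= subr_eq0 => /eqP ->.
have iv : forall s, s \in S -> 0 < nu s -> dotp c s = dotp c y.
  move=> s sS ns; have := sum_seq_eq0 _ LE sS.
  move=> /(_ _) h; have /eqP := h (fun t tS => mulr_ge0 (nu0 t) (eq_ler_sub (dy t tS))).
  by rewrite mulf_eq0 (gt_eqF ns) /= subr_eq0 => /eqP.
have lexk : forall k, (k <= m)%nat -> forall s, s \in S -> 0 < nu s ->
    forall i : 'I_m, (i < k)%nat -> s i = y i.
  elim => [|k IH] hk s sS ns i ik; first by rewrite ltn0 in ik.
  have hk' : (k < m)%nat by [].
  pose jk := Ordinal hk'.
  have ge : forall s, s \in S -> 0 < nu s -> (y jk <= s jk)%nat.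
    move=> t tS nt; case: (pselect (t = y)) => [->//|ne].
    case: (hmin t tS ne) => [hd|[_ [j [hj ej]]]].
      by move: hd; rewrite (iv t tS nt) ltxx.
    case: (ltngtP j k) => cjk.
    - by move: hj; rewrite (IH (ltnW hk) t tS nt j cjk) ltnn.
    - by rewrite (ej jk cjk).
    - have e : j = jk by apply: val_inj.
      by subst j; apply: ltnW.
  have eqk : forall s, s \in S -> 0 < nu s -> s jk = y jk.
    have Z : \sum_(t <- S) nu t * ((t jk)%:R - (y jk)%:R) = 0.
      under eq_bigr do rewrite mulrBr.
      by rewrite sumrB -mulr_suml nu1 mul1r iii subrr.
    have hh : forall t, t \in S -> 0 <= nu t * ((t jk)%:R - (y jk)%:R).
      move=> u uS; case: (ltrP 0 (nu u)) => nu_pos.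
        by apply: mulr_ge0 => //; rewrite subr_ge0 ler_nat; apply: ge.
      have -> : nu u = 0 by apply: le_anti; rewrite nu_pos nu0.
      by rewrite mul0r.
    move=> t tS nt; have /eqP := sum_seq_eq0 hh Z tS.
    rewrite mulf_eq0 (gt_eqF nt) /= subr_eq0 eqr_nat => /eqP.
    by [].
  case: (ltngtP i k) => cik.
  - exact: IH (ltnW hk) s sS ns i cik.
  - by move: ik; rewrite ltnS leqNgt cik.
  - have e : i = jk by apply: val_inj.
    by subst i; apply: eqk.
have supp : forall s, s \in S -> 0 < nu s -> s = y.
  move=> s sS ns; apply/ffunP => i; apply: (lexk m (leqnn m) s sS ns i (ltn_ord i)).
have zero : forall s, s \in S -> s != y -> la s = 0 /\ mu s = 0.
  move=> s sS ne; have hn : nu s = 0.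
    apply: le_anti; rewrite nu0 andbT leNgt; apply/negP => h.
    by move: ne; rewrite (supp s sS h) eqxx.
  have := la0 s; have := mu0 s; move: hn; rewrite /nu => hn h1 h2; split; lra.
have rest : forall (f : pt -> R) (g : pt -> R), (forall s, s \in S -> s != y -> f s = 0) ->
    \sum_(s <- S) f s * g s = f y * g y.
  move=> f g hf; rewrite (big_fsetD1 y) //= big1_seq ?addr0 // => s /andP[_].
  by rewrite in_fsetD1 => /andP[ne sS]; rewrite hf // mul0r.
have lay : la y = 1.
  have := rest la (fun _ => 1) (fun s sS ne => (zero s sS ne).1).
  under eq_bigr do rewrite mulr1.
  by rewrite la1 mulr1.
have muy : mu y = 1.
  have := rest mu (fun _ => 1) (fun s sS ne => (zero s sS ne).2).
  under eq_bigr do rewrite mulr1.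
  by rewrite mu1 mulr1.
move=> i.
have := la2 i; rewrite (rest la (fun s => (s i)%:R) (fun s sS ne => (zero s sS ne).1)) lay mul1r.
have := mu2 i; rewrite (rest mu (fun s => (s i)%:R) (fun s sS ne => (zero s sS ne).2)) muy mul1r.
have := mid i; rewrite /embed; lra.
Qed.

Lemma ltc_good c : (forall i, 0 < c i) -> good (ltc c).
Proof. by move=> c0; split; [apply: ltc_mono|apply: ltc_F2]. Qed.

End Ord.

Lemma interval_ex (I : finType) (P N : pred I) (l u : I -> R) :
  (forall p q, P p -> N q -> l p < u q) ->
  exists t, (forall p, P p -> l p < t) /\ (forall q, N q -> t < u q).
Proof.
move=> h.
case: (pselect (exists p, P p)) => [[p0 hp0]|nP]; case: (pselect (exists q, N q)) => [[q0 hq0]|nN].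
- pose L := \big[Order.max/l p0]_(p | P p) l p.
  pose U := \big[Order.min/u q0]_(q | N q) u q.
  have LU : L < U.
    apply/bigmax_ltP; split.
      by apply: lt_bigmin => [|q hq]; apply: h.
    by move=> p hp; apply: lt_bigmin => [|q hq]; apply: h.
  exists ((L + U) / 2); split.
    move=> p hp; have : l p <= L by apply: le_bigmax_cond.
    lra.
  move=> q hq; have : U <= u q by apply: bigmin_le_cond.
  lra.
- pose L := \big[Order.max/l p0]_(p | P p) l p.
  exists (L + 1); split => [p hp|q hq]; last by case: nN; exists q.
  have : l p <= L by apply: le_bigmax_cond.
  lra.
- pose U := \big[Order.min/u q0]_(q | N q) u q.
  exists (U - 1); split => [p hp|q hq]; first by case: nP; exists p.
  have : U <= u q by apply: bigmin_le_cond.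
  lra.
- by exists 0; split => [p hp|q hq]; [case: nP; exists p|case: nN; exists q].
Qed.

Section Gordan.
Variable m : nat.

Definition dotv (c v : 'I_m -> R) : R := \sum_j c j * v j.

Lemma dotv_upd (c w : 'I_m -> R) (jn : 'I_m) t :
  dotv (fun j => if j == jn then t else c j) w = dotv c w + (t - c jn) * w jn.
Proof.
rewrite /dotv (bigD1 jn) //= eqxx [in RHS](bigD1 jn) //=.
have -> : \sum_(j | j != jn) (if j == jn then t else c j) * w j = \sum_(j | j != jn) c j * w j.
  by apply: eq_bigr => j /negbTE ->.
ring.
Qed.

Lemma dotv_lin (c v w : 'I_m -> R) a b :
  dotv c (fun j => a * v j + b * w j) = a * dotv c v + b * dotv c w.
Proof.
rewrite /dotv !mulr_sumr -big_split /=; apply: eq_bigr => j _; ring.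
Qed.

Lemma pos_comb_pos (a d s : R) : 0 < a -> 0 < d / a + s -> 0 < d + s * a.
Proof.
move=> a0 h; have -> : d + s * a = (d / a + s) * a by field; rewrite gt_eqF.
exact: mulr_gt0.
Qed.

Lemma neg_comb_pos (a d s : R) : a < 0 -> s < d / (- a) -> 0 < d + s * a.
Proof.
move=> a0 h; have -> : d + s * a = (d / (- a) - s) * (- a).
  by field; rewrite ?oppr_eq0 lt_eqF.
by apply: mulr_gt0; lra.
Qed.

Lemma gordan n : forall (I : finType) (A : pred I) (v : I -> 'I_m -> R),
  (forall i, A i -> forall j : 'I_m, (n <= j)%nat -> v i j = 0) ->
  (exists c, forall i, A i -> 0 < dotv c (v i)) \/
  (exists nu : I -> R, (forall i, 0 <= nu i) /\ (exists i, A i /\ 0 < nu i) /\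
     forall j, \sum_(i | A i) nu i * v i j = 0).
Proof.
elim: n => [|n IH] I A v hv.
  case: (pselect (exists i, A i)) => [[i0 hi0]|nA].
    right; exists (fun _ => 1); split => //; split; first by exists i0; split.
    by move=> j; rewrite big1 // => i Ai; rewrite hv // mulr0.
  by left; exists (fun _ => 0) => i Ai; case: nA; exists i.
case: (ltnP n m) => hnm; last first.
  apply: IH => i Ai j hj; apply: hv => //.
  by move: (leq_trans (ltn_ord j) hnm); rewrite ltnNge hj.
pose jn := Ordinal hnm.
pose a i := v i jn.
pose I' := (I + I * I)%type.
pose A' : pred I' := fun x => match x with
  | inl i => A i && (a i == 0)
  | inr pq => [&& A pq.1, 0 < a pq.1, A pq.2 & a pq.2 < 0] end.
pose v' : I' -> 'I_m -> R := fun x => match x with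
  | inl i => v i
  | inr pq => fun j => - a pq.2 * v pq.1 j + a pq.1 * v pq.2 j end.
have hv' : forall x, A' x -> forall j : 'I_m, (n <= j)%nat -> v' x j = 0.
  move=> x Ax j hj; case: (ltngtP n j) => cj.
  - case: x Ax => [i /andP[Ai _]|[p q] /and4P[Ap _ Aq _]] /=; first exact: hv.
    by rewrite !hv // !mulr0 addr0.
  - by move: hj; rewrite leqNgt cj.
  - have e : j = jn by apply: val_inj.
    subst j; case: x Ax => [i /andP[_ /eqP]|[p q] _] //=.
    by rewrite /a; ring.
case: (IH I' A' v' hv') => [[c' hc']|[nu' [nu0' [[x [Ax nx]] hsum']]]].
  left.
  pose d i := dotv c' (v i).
  pose l p := c' jn - d p / a p.
  pose u q := c' jn + d q / (- a q).
  have hlu : forall p q, A p && (0 < a p) -> A q && (a q < 0) -> l p < u q.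
    move=> p q /andP[Ap ap] /andP[Aq aq].
    have h : 0 < dotv c' (v' (inr (p, q))) by apply: hc'; rewrite /A' /= Ap ap Aq aq.
    rewrite /v' /= dotv_lin in h.
    have e : d p / a p + d q / (- a q) = (- a q * d p + a p * d q) / (a p * (- a q)).
      by field; rewrite ?oppr_eq0 (gt_eqF ap) (lt_eqF aq).
    have : 0 < d p / a p + d q / (- a q).
      by rewrite e; apply: divr_gt0 => //; apply: mulr_gt0 => //; rewrite oppr_gt0.
    rewrite /l /u; lra.
  have [t [ht1 ht2]] := @interval_ex I _ _ l u hlu.
  exists (fun j => if j == jn then t else c' j) => i Ai.
  rewrite dotv_upd -/(d i) -/(a i).
  case: (ltgtP (a i) 0) => ai.
  - apply: neg_comb_pos => //; have := ht2 i; rewrite Ai ai /u => /(_ isT); lra.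
  - apply: pos_comb_pos => //; have := ht1 i; rewrite Ai ai /l => /(_ isT); lra.
  - rewrite ai mulr0 addr0; apply: (hc' (inl i)); by rewrite /A' /= Ai ai eqxx.
right.
pose P i := A i && (0 < a i).
pose N i := A i && (a i < 0).
pose Z i := A i && (a i == 0).
pose nu i := (if Z i then nu' (inl i) else 0)
           + (if P i then \sum_(q | N q) nu' (inr (i, q)) * (- a q) else 0)
           + (if N i then \sum_(p | P p) nu' (inr (p, i)) * a p else 0).
have Ngt : forall q, N q -> 0 <= - a q by move=> q /andP[_ aq]; rewrite oppr_ge0 ltW.
have Pgt : forall p, P p -> 0 <= a p by move=> p /andP[_ ap]; rewrite ltW.
exists nu; split.
  move=> i; rewrite /nu; apply: addr_ge0; first apply: addr_ge0.
  - by case: ifP => _ //; apply: nu0'.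
  - case: ifP => _ //; apply: sumr_ge0 => q hq; apply: mulr_ge0; [exact: nu0'|exact: Ngt].
  - case: ifP => _ //; apply: sumr_ge0 => p hp; apply: mulr_ge0; [exact: nu0'|exact: Pgt].
split.
  case: x Ax nx => [i|[p q]] /= Ax nx.
    move: Ax => /andP[Ai /eqP ai].
    exists i; split => //.
    by rewrite /nu /Z /P /N Ai ai eqxx ltxx /= !addr0.
  move: Ax => /and4P[Ap ap Aq aq].
  exists p; split => //.
  rewrite /nu /Z /P /N Ap ap (gt_eqF ap) /= (lt_gtF ap) /= add0r addr0.
  rewrite (bigD1 q) /=; last by rewrite /N Aq aq.
  have : 0 <= \sum_(i | N i && (i != q)) nu' (inr (p, i)) * - a i.
    apply: sumr_ge0 => i /andP[hi _]; apply: mulr_ge0; [exact: nu0'|exact: Ngt].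
  have : 0 < nu' (inr (p, q)) * - a q by apply: mulr_gt0 => //; rewrite oppr_gt0.
  lra.
move=> j.
have step1 : \sum_(i | A i) nu i * v i j =
   \sum_(i | Z i) nu' (inl i) * v i j +
   \sum_p \sum_q (if P p && N q then nu' (inr (p, q)) * (- a q * v p j + a p * v q j) else 0).
  rewrite big_mkcond.
  have pw : forall i, (if A i then nu i * v i j else 0) =
     (if Z i then nu' (inl i) * v i j else 0) +
     ((if P i then (\sum_(q | N q) nu' (inr (i, q)) * (- a q)) * v i j else 0) +
      (if N i then (\sum_(p | P p) nu' (inr (p, i)) * a p) * v i j else 0)).
    move=> i; rewrite /nu /Z /P /N; case: (A i) => /=; last by rewrite !addr0.
    by case: (ltgtP (a i) 0) => ai /=; rewrite ?mulrDl ?mul0r ?add0r ?addr0.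
  under eq_bigr do rewrite pw.
  rewrite big_split /= -big_mkcond /=; congr (_ + _).
  rewrite big_split /=.
  have eY : \sum_i (if P i then (\sum_(q | N q) nu' (inr (i, q)) * - a q) * v i j else 0) =
      \sum_p \sum_q (if P p && N q then nu' (inr (p, q)) * (- a q) * v p j else 0).
    apply: eq_bigr => p _; case: (P p) => /=; last by rewrite big1.
    by rewrite mulr_suml big_mkcond.
  have eZ : \sum_i (if N i then (\sum_(p | P p) nu' (inr (p, i)) * a p) * v i j else 0) =
      \sum_p \sum_q (if P p && N q then nu' (inr (p, q)) * a p * v q j else 0).
    rewrite exchange_big /=; apply: eq_bigr => q _; case: (boolP (N q)) => nq.
      rewrite mulr_suml big_mkcond; apply: eq_bigr => p _; by rewrite andbT.
    by rewrite big1 // => p _; rewrite andbF.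
  rewrite eY eZ -big_split /=; apply: eq_bigr => p _; rewrite -big_split /=.
  apply: eq_bigr => q _; case: (P p && N q); last by rewrite addr0.
  by rewrite mulrDr !mulrA.
rewrite step1 -[RHS](hsum' j) big_sumType /=; congr (_ + _).
rewrite pair_big [RHS]big_mkcond /=; apply: eq_bigr => [[p q]] _ /=.
by rewrite /P /N; case: (A p); case: (0 < a p); case: (A q); case: (a q < 0).
Qed.

End Gordan.

Section Sep.
Variable m : nat.
Local Notation pt := (Defs.pt m).
Local Notation fsub := (Defs.fsub m).

Lemma dotv_ind (c : 'I_m -> R) (k : 'I_m) : dotv c (fun j => (j == k)%:R) = c k.
Proof.
rewrite /dotv (bigD1 k) //= eqxx mulr1 big1 ?addr0 // => j /negbTE ->; by rewrite mulr0.
Qed.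

Lemma dotv_diff (c : 'I_m -> R) (s y : pt) :
  dotv c (fun j => (s j)%:R - (y j)%:R) = dotp c s - dotp c y.
Proof. by rewrite /dotv /dotp -sumrB; apply: eq_bigr => j _; rewrite mulrBr. Qed.

Lemma sep (b : fsub) y : y \in b -> is_vertex b (embed y) ->
  exists c : 'I_m -> R, (forall i, 0 < c i) /\
    forall s, s \in b -> s != y -> dotp c y < dotp c s.
Proof.
move=> yb hv.
pose I := (b + 'I_m)%type.
pose A : pred I := fun x => match x with inl s => val s != y | inr _ => true end.
pose v : I -> 'I_m -> R := fun x => match x with
  | inl s => fun j => ((val s) j)%:R - (y j)%:R
  | inr k => fun j => (j == k)%:R end.
have hv0 : forall x, A x -> forall j : 'I_m, (m <= j)%nat -> v x j = 0.
  by move=> x _ j; rewrite leqNgt ltn_ord.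
case: (@gordan m m I A v hv0) => [[c hc]|[nu [nu0 [[x [Ax nx]] hsum]]]].
  exists c; split.
    by move=> i; have := hc (inr i) isT; rewrite /v dotv_ind.
  move=> s sb ne; have := hc (inl [` sb]) ne; rewrite /v /= dotv_diff; lra.
exfalso.
have hsplit : forall j, \sum_(s : b | val s != y) nu (inl s) * ((val s j)%:R - (y j)%:R)
    + nu (inr j) = 0.
  move=> j; rewrite -[RHS](hsum j) big_sumType /=; congr (_ + _).
  rewrite (bigD1 j) //= eqxx mulr1 big1 ?addr0 // => k.
  by rewrite eq_sym => /negbTE ->; rewrite mulr0.
pose Nn := \sum_(s : b | val s != y) nu (inl s).
case: (ltrP 0 Nn) => hN; last first.
  have z : forall s : b, val s != y -> nu (inl s) = 0.
    have Nn0 : Nn = 0 by apply: le_anti; rewrite hN; apply: sumr_ge0 => s _; apply: nu0.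
    by move=> s hs; apply: (psumr_eq0P (fun s _ => nu0 (inl s)) Nn0).
  have zk : forall k, nu (inr k) = 0.
    move=> k; have := hsplit k; rewrite big1 ?add0r // => s hs; by rewrite z // mul0r.
  case: x Ax nx => [s|k] /= Ax nx.
    by rewrite z // ltxx in nx.
  by rewrite zk ltxx in nx.
pose lam (t : pt) := \sum_(s : b | val s != y) nu (inl s) * (t == val s)%:R / Nn.
have lamE : forall g : pt -> R, \sum_(t <- b) lam t * g t =
    (\sum_(s : b | val s != y) nu (inl s) * g (val s)) / Nn.
  move=> g; rewrite /lam; under eq_bigr do rewrite mulr_suml.
  rewrite exchange_big /= [RHS]mulr_suml; apply: eq_bigr => s hs.
  transitivity (\sum_(t <- b) (t == val s)%:R * (nu (inl s) / Nn * g t)).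
    by apply: eq_bigr => t _; ring.
  by rewrite sum_ind ?fsvalP //; ring.
have lam0 : forall t, 0 <= lam t.
  move=> t; apply: sumr_ge0 => s _; apply: divr_ge0; last exact: ltW.
  by apply: mulr_ge0 => //; rewrite ler0n.
have lam1 : \sum_(t <- b) lam t = 1.
  have := lamE (fun _ => 1); under eq_bigr do rewrite mulr1.
  by move=> ->; under eq_bigr do rewrite mulr1; rewrite mulfV // gt_eqF.
have lam2 : forall i, \sum_(t <- b) lam t * (t i)%:R <= embed y i.
  move=> i; rewrite lamE ler_pdivrMr // /embed.
  have := hsplit i; under eq_bigr do rewrite mulrBr.
  rewrite sumrB -mulr_suml -/Nn => h.
  have := nu0 (inr i); lra.
have lamy : lam y = 0.
  rewrite /lam big1 // => s hs; rewrite eq_sym (negbTE hs) mulr0 mul0r //.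
have [t tb lt0] := pos_weight lam1.
have := newton_ext hv lam0 lam1 lam2 tb lt0.
move=> /embed_inj ety; subst t.
by rewrite lamy ltxx in lt0.
Qed.

End Sep.

Lemma sep_order m (b : Defs.fsub m) y : y \in b -> is_vertex b (embed y) ->
  exists lt, good lt /\ is_min lt b y.
Proof.
move=> yb hv; have [c [c0 hc]] := sep yb hv.
exists (ltc c); split; first exact: ltc_good.
split => // s sb ne; left; apply: hc => //; exact/eqP.
Qed.


Section Main.
Variable m : nat.
Local Notation pt := (Defs.pt m).
Local Notation fsub := (Defs.fsub m).
Local Notation frac := (Defs.frac m).
Variable I : frac -> Prop.
Hypothesis hI : maximal_k_ideal I.

Let kI : k_ideal I := hI.1.
Let Icirc p : I p -> circ p := kI.1.1.1 p.
Let Icl p q : circ q -> frac_eq p q -> I p -> I q := kI.1.1.2 p q.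
Let I0 : I (fzero m) := kI.1.2.1.
Let Iadd p q : I p -> I q -> I (frac_add p q) := kI.1.2.2.1 p q.
Let Imul r p : circ r -> I p -> I (frac_mul r p) := kI.1.2.2.2 r p.

Lemma notI1 : ~ I (fone m).
Proof.
move=> h; have [p [cp np]] := hI.2.1; apply: np.
apply: (Icl cp _ (Imul cp h)).
case: p cp => a b /circP [va vb _ _].
by rewrite /frac_eq /frac_mul /= !vmul1 va vb.
Qed.

Lemma aol1 q : I q -> exists lt, good lt /\ mpos lt q.
Proof.
case: q => a b Iq; have cq := Icirc Iq; have /circP [va vb b0 hP] := cq.
case: (pselect (exists2 y, y \in b & y \notin a)) => [[y yb ya]|hn].
  have : y \in Vert b by rewrite vb.
  rewrite inVert => /andP[_ /asboolP hv].
  have [lt [gd hm]] := sep_order yb hv.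
  exists lt; split => // y' /= hy'.
  by rewrite (min_uniq gd.1 hy' hm).
exfalso; apply: notI1.
have ba : b `<=` a.
  apply/fsubsetP => y yb; case: (boolP (y \in a)) => // ya.
  by case: hn; exists y.
have hV := proj2 (Vert_union a vb) hP.
move: hV; rewrite (fsetUidPl _ _ ba) va => eab; subst b.
apply: (Icl (circ_fone m) _ Iq).
by rewrite /frac_eq /= vmul1 vmul1l va.
Qed.

Lemma sum_list (ps : seq frac) : (forall p, p \in ps -> I p) ->
  I (foldr (@frac_add m) (fzero m) ps) /\
  forall lt, good lt -> mpos lt (foldr (@frac_add m) (fzero m) ps) -> forall p, p \in ps -> mpos lt p.
Proof.
elim: ps => [|p ps IH] hps /=; first by split.
have hps' : forall q, q \in ps -> I q by move=> q qi; apply: hps; rewrite inE qi orbT.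
have [Is hs] := IH hps'.
have Ip : I p by apply: hps; rewrite inE eqxx.
split; first exact: Iadd.
move=> lt gd.
move: (Icirc Ip) (Icirc Is) (hs lt gd).
move: (foldr _ _ ps) => s.
case: p {Ip hps} => a b; case: s => c d cp cs hs' hsum q.
have [h1 h2] := mpos_add_inv gd cp cs hsum.
rewrite inE => /orP[/eqP ->//|qps]; exact: hs'.
Qed.

Lemma aoln (ps : seq frac) : (forall p, p \in ps -> I p) ->
  exists lt, good lt /\ forall p, p \in ps -> mpos lt p.
Proof.
move=> hps; have [Is hs] := sum_list hps.
have [lt [gd hm]] := aol1 Is.
by exists lt; split => //; apply: hs.
Qed.

Lemma maxl (Phi : (pt -> pt -> Prop) -> Prop) :
  (forall i, I i -> exists lt, [/\ good lt, mpos lt i & Phi lt]) ->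
  forall z, circ z -> (forall lt, good lt -> Phi lt -> mpos lt z) -> I z.
Proof.
move=> hyp z cz hz.
pose J w := circ w /\ exists i, I i /\ forall lt, good lt -> mpos lt i -> Phi lt -> mpos lt w.
have mpos_sum : forall lt (p q : frac), good lt -> circ p -> circ q ->
    mpos lt (frac_add p q) -> mpos lt p /\ mpos lt q.
  by move=> lt [a b] [c d] gd; apply: mpos_add_inv.
have kJ : k_ideal J.
  split; [split; [split|split; [|split]]|].
  - by move=> p [].
  - move=> p q cq e [cp [i [Ii hi]]]; split => //; exists i; split => // lt gd mi ph.
    have := hi lt gd mi ph; move: cp cq e; clear hi; case: p => a b; case: q => c d.
    exact: (mpos_eq gd).
  - split; first exact: (circ_fzero m).
    by exists (fzero m); split => // lt gd _ _; apply: mpos_fzero.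
  - move=> p q [cp [i [Ii hi]]] [cq [j [Ij hj]]]; split; first exact: circ_add.
    exists (frac_add i j); split; first exact: Iadd.
    move=> lt gd mij ph; have [mi mj] := mpos_sum _ _ _ gd (Icirc Ii) (Icirc Ij) mij.
    have := hj lt gd mj ph; have := hi lt gd mi ph; move: cp cq; clear hi hj.
    case: p => a b; case: q => c d; exact: (mpos_add gd).
  - move=> r p cr [cp [i [Ii hi]]]; split; first exact: circ_mul.
    exists i; split => // lt gd mi ph.
    have := hi lt gd mi ph; move: cr cp; clear hi.
    case: r => a b; case: p => c d; exact: (mpos_mul gd).
  - move=> p q cp cq [_ [i [Ii hi]]] _; split => //; exists i; split => // lt gd mi ph.
    exact: (mpos_sum _ _ _ gd cp cq (hi lt gd mi ph)).2.
have pJ : Defs.proper J.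
  exists (fone m); split; first exact: (circ_fone m).
  move=> [_ [i [Ii hi]]]; have [lt [gd mi ph]] := hyp i Ii.
  exact: (not_mpos_fone (hi lt gd mi ph)).
have IJ : forall p, I p -> J p.
  by move=> p Ip; split; [exact: Icirc|exists p].
apply: (hI.2.2 J kJ pJ IJ); split => //.
by exists (fzero m); split => // lt gd _ ph; apply: hz.
Qed.

Definition Rel (u v : pt) := I (Y u v).

Lemma Rel_irr u : ~ Rel u u.
Proof.
move=> h; have [lt [gd mp]] := aol1 h.
exact: (mo_irr gd.1 (mposY_lt gd mp)).
Qed.

Lemma not_Rel u v : ~ Rel u v ->
  exists i, I i /\ forall lt, good lt -> mpos lt i -> ~ lt u v.
Proof.
move=> nR; case: (pselect (exists i, I i /\ forall lt, good lt -> mpos lt i -> ~ lt u v)) => // hn.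
exfalso; apply: nR; apply: (@maxl (fun lt => lt u v)); last first.
- by move=> lt gd; apply: lt_mposY.
- exact: circY.
move=> i Ii; case: (pselect (exists lt, [/\ good lt, mpos lt i & lt u v])) => // hn2.
exfalso; apply: hn; exists i; split => // lt gd mi luv; apply: hn2; by exists lt.
Qed.

Lemma Rel_total u v : u <> v -> Rel u v \/ Rel v u.
Proof.
move=> ne; case: (pselect (Rel u v)) => [h|h1]; first by left.
case: (pselect (Rel v u)) => [h|h2]; first by right.
have [i1 [I1 hi1]] := not_Rel h1; have [i2 [I2 hi2]] := not_Rel h2.
have [lt [gd hm]] : exists lt, good lt /\ forall p, p \in [:: i1; i2] -> mpos lt p.
  by apply: aoln => p; rewrite !inE => /orP[] /eqP ->.
exfalso; case: (mo_total gd.1 ne) => h.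
  by apply: (hi1 lt gd) => //; apply: hm; rewrite !inE eqxx.
by apply: (hi2 lt gd) => //; apply: hm; rewrite !inE eqxx orbT.
Qed.

Lemma Rel_mono : monomial_order Rel.
Proof.
have mY : forall (u v : pt) (ps : seq frac) lt, (forall p, p \in ps -> mpos lt p) ->
   good lt -> Y u v \in ps -> lt u v.
  by move=> u v ps lt hm gd hin; apply: (mposY_lt gd); apply: hm.
split; first exact: Rel_irr.
split.
  move=> u v w h1 h2.
  case: (pselect (u = w)) => [e|ne].
    subst w; have [lt [gd hm]] : exists lt, good lt /\ forall p, p \in [:: Y u v; Y v u] -> mpos lt p.
      by apply: aoln => p; rewrite !inE => /orP[] /eqP ->.
    have := mY u v _ _ hm gd; have := mY v u _ _ hm gd.
    rewrite !inE !eqxx ?orbT => /(_ isT) h3 /(_ isT) h4.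
    by case: (mo_asym gd.1 h3 h4).
  case: (Rel_total ne) => // h3.
  have [lt [gd hm]] : exists lt, good lt /\ forall p, p \in [:: Y u v; Y v w; Y w u] -> mpos lt p.
    by apply: aoln => p; rewrite !inE => /orP[/eqP->//|/orP[] /eqP ->].
  have a1 := mY u v _ _ hm gd; have a2 := mY v w _ _ hm gd; have a3 := mY w u _ _ hm gd.
  rewrite !inE !eqxx ?orbT in a1 a2 a3.
  case: (mo_irr gd.1 (mo_trans gd.1 (mo_trans gd.1 (a1 isT) (a2 isT)) (a3 isT))).
split; first exact: Rel_total.
split.
  move=> a a0; case: (Rel_total (nesym a0)) => // h.
  have [lt [gd mp]] := aol1 h.
  case: (mo_asym gd.1 (mposY_lt gd mp) (mo_pos gd.1 a0)).
move=> a b c h.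
have ab : a <> b by move=> e; subst; apply: (Rel_irr h).
have abc : padd a c <> padd b c by move=> /paddI.
case: (Rel_total abc) => // h2.
have [lt [gd hm]] : exists lt, good lt /\ forall p, p \in [:: Y a b; Y (padd b c) (padd a c)] -> mpos lt p.
  by apply: aoln => p; rewrite !inE => /orP[] /eqP ->.
have a1 := mY a b _ _ hm gd; have a2 := mY (padd b c) (padd a c) _ _ hm gd.
rewrite !inE !eqxx ?orbT in a1 a2.
case: (mo_asym gd.1 (mo_add gd.1 c (a1 isT)) (a2 isT)).
Qed.

Lemma key (b : fsub) y0 : is_min Rel b y0 ->
  forall i, I i -> exists lt, [/\ good lt, mpos lt i & is_min lt b y0].
Proof.
move=> hb i Ii.
pose ps := i :: [seq Y y0 y | y <- [seq y <- (b : seq pt) | y != y0]].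
have hps : forall p, p \in ps -> I p.
  move=> p; rewrite inE => /orP[/eqP->//|/mapP [y]].
  rewrite mem_filter => /andP[ny yb] ->.
  by case: hb => _ h; apply: (h y yb); apply/eqP.
have [lt [gd hm]] := aoln hps.
exists lt; split => //; first by apply: hm; rewrite inE eqxx.
split; first by case: hb.
move=> z zb nz; apply: (mposY_lt gd); apply: hm.
rewrite inE; apply/orP; right; apply/mapP; exists z => //.
by rewrite mem_filter zb andbT; apply/eqP.
Qed.

End Main.

Theorem corollary4p12 (m : nat) (I : Defs.frac m -> Prop) :
  maximal_k_ideal I ->
  exists lt : pt m -> pt m -> Prop,
    monomial_order lt /\
    forall p, circ p -> (I p <-> mdagger lt p).
Proof.
move=> hI; exists (Rel I); split; first exact: Rel_mono.
move=> [a b] cp.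
have [y0 hy0] : exists y, is_min (Rel I) b y.
  by move: cp => /circP [_ _ /ne0P [t tb] _]; apply: (ex_min (Rel_mono hI) tb).
split.
  move=> Ip; have [lt [gd mp hm]] := key hI hy0 Ip.
  split => //; exists a, b; split; first by case: cp.
  split; first by [].
  by exists y0; split => //; apply: mp.
move=> [_ [a' [b' [fr [e [y [hy ny]]]]]]].
apply: (@maxl _ _ hI (fun lt => is_min lt b' y)).
- by move=> i Ii; exact: (key hI hy Ii).
- exact: cp.
- by move=> lt gd hm; apply: (mpos_eq2 gd cp e hm ny).
Qed.
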